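(* Let $\alpha,a,b\in\mathbb{C}$ be such that none of $\alpha+a,\alpha-a,\alpha+b,\alpha-b$ belongs to $\{0,-1,-2,\ldots\}$. Then \[ \sum_{k=0}^{\infty}\frac{k+\alpha}{((k+\alpha)^2-a^2)((k+\alpha)^2-b^2)} =\frac12\sum_{n=1}^{\infty}\frac{(-1)^{n-1}(1\pm a\pm b)_{n-1}\bigl(5n^2-6n(1-\alpha)+2(1-\alpha)^2-a^2-b^2\bigr)}{n\binom{2n}{n}(\alpha\pm a)_n(\alpha\pm b)_n}. \]
   Context: $(x)_n=x(x+1)\cdots(x+n-1)$, $(x)_0=1$, is the Pochhammer symbol. The notation $(u\pm v\pm w)_m$ denotes the product of the four factors $(u+v+w)_m(u+v-w)_m(u-v+w)_m(u-v-w)_m$, and $(u\pm v)_m=(u+v)_m(u-v)_m$. *)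

(* Defs.v *)
From Stdlib Require Import Reals Factorial.
From Coquelicot Require Import Coquelicot.
Open Scope C_scope.

Fixpoint poch (x : C) (n : nat) : C :=
  match n with
  | O => 1
  | S m => poch x m * (x + RtoC (INR m))
  end.

Definition cbinom (n : nat) : R :=
  (INR (Factorial.fact (2 * n)) / (INR (Factorial.fact n) * INR (Factorial.fact n)))%R.

Definition lhs_term (alpha a b : C) (k : nat) : C :=
  let x := RtoC (INR k) + alpha in
  x / ((x * x - a * a) * (x * x - b * b)).

(* Right-hand summand (without the factor 1/2), n >= 1. *)
Definition rhs_term (alpha a b : C) (n : nat) : C :=
  let N := RtoC (INR n) in
  (Cpow (RtoC (-1)) (n - 1)
   * (poch (1 + a + b) (n - 1) * poch (1 + a - b) (n - 1)
      * poch (1 - a + b) (n - 1) * poch (1 - a - b) (n - 1))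
   * (5 * N * N - 6 * N * (1 - alpha) + 2 * (1 - alpha) * (1 - alpha)
      - a * a - b * b))
  / (N * RtoC (cbinom n)
     * (poch (alpha + a) n * poch (alpha - a) n)
     * (poch (alpha + b) n * poch (alpha - b) n)).

(* Main.v *)
Require Import Defs.
From Stdlib Require Import Reals Factorial Lia Lra.
From Coquelicot Require Import Coquelicot.
Open Scope C_scope.

Definition QQ (a b : C) (n : nat) : C :=
  poch (1 + a + b) n * poch (1 + a - b) n * poch (1 - a + b) n * poch (1 - a - b) n.
Definition PP (a b x : C) (n : nat) : C :=
  (poch (x + a) n * poch (x - a) n) * (poch (x + b) n * poch (x - b) n).
Definition hh (x a b : C) (m : nat) : C :=
  Cpow (RtoC (-1)) m * QQ a b m * (2 * x + RtoC (INR m))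
  / (RtoC (cbinom m) * PP a b x (S m)).

Lemma poch_shift (x : C) (n : nat) : x <> 0 ->
  poch (x + 1) n = poch x n * (x + RtoC (INR n)) / x.
Proof.
  intro Hx. induction n as [|n IH].
  - simpl. field. auto.
  - change (poch (x+1) (S n)) with (poch (x+1) n * (x + 1 + RtoC (INR n))).
    change (poch x (S n)) with (poch x n * (x + RtoC (INR n))).
    rewrite IH, S_INR, RtoC_plus. field. auto.
Qed.

Lemma pochS (y : C) (n : nat) : poch y (S n) = poch y n * (y + RtoC (INR n)).
Proof. reflexivity. Qed.

Lemma CpowS (y : C) (n : nat) : Cpow y (S n) = y * Cpow y n.
Proof. reflexivity. Qed.

Lemma Cmult_neq0 (u v : C) : u <> 0 -> v <> 0 -> u * v <> 0.
Proof.
  intros Hu Hv. apply Cmod_gt_0. rewrite Cmod_mult.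
  apply Cmod_gt_0 in Hu. apply Cmod_gt_0 in Hv. nra.
Qed.

Lemma poch_nz (y : C) (n : nat) : (forall j : nat, y + RtoC (INR j) <> 0) -> poch y n <> 0.
Proof.
  intro H. induction n as [|n IH].
  - simpl. exact C1_nz.
  - rewrite pochS. apply Cmult_neq0; auto.
Qed.

Lemma cbinom_S (m : nat) :
  cbinom (S m) = (cbinom m * (2 * (2 * INR m + 1)) / (INR m + 1))%R.
Proof.
  unfold cbinom.
  replace (2 * S m)%nat with (S (S (2 * m))) by lia.
  rewrite !fact_simpl. rewrite !mult_INR, !S_INR.
  replace (INR (2*m)) with (2 * INR m)%R by (rewrite mult_INR; simpl; lra).
  assert (0 < INR (fact m))%R by (apply lt_0_INR, lt_O_fact).
  assert (0 <= INR m)%R by apply pos_INR.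
  field. lra.
Qed.

Lemma cbinom_pos (m : nat) : (0 < cbinom m)%R.
Proof.
  unfold cbinom. assert (0 < INR (fact m))%R by (apply lt_0_INR, lt_O_fact).
  assert (0 < INR (fact (2*m)))%R by (apply lt_0_INR, lt_O_fact).
  apply Rdiv_lt_0_compat; nra.
Qed.

Lemma RtoC_neq0 (r : R) : r <> 0%R -> RtoC r <> 0.
Proof. intros H E. apply H. apply (f_equal fst) in E. exact E. Qed.

Lemma cbinom_SC (m : nat) :
  RtoC (cbinom (S m)) =
  RtoC (cbinom m) * (2 * (2 * RtoC (INR m) + 1)) / (RtoC (INR m) + 1).
Proof.
  assert (0 <= INR m)%R by apply pos_INR.
  rewrite cbinom_S. unfold Rdiv.
  rewrite RtoC_mult, RtoC_inv by lra. repeat (rewrite ?RtoC_mult, ?RtoC_plus).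
  unfold Cdiv. reflexivity.
Qed.

Lemma key_id (x a b : C) (m : nat) :
  (forall j : nat, x + a + RtoC (INR j) <> 0) ->
  (forall j : nat, x - a + RtoC (INR j) <> 0) ->
  (forall j : nat, x + b + RtoC (INR j) <> 0) ->
  (forall j : nat, x - b + RtoC (INR j) <> 0) ->
  rhs_term x a b (S m) - rhs_term (x + 1) a b (S m) = hh x a b m - hh x a b (S m).
Proof.
  intros H1 H2 H3 H4.
  assert (Z1 := H1 0%nat). assert (Z2 := H2 0%nat). assert (Z3 := H3 0%nat). assert (Z4 := H4 0%nat).
  assert (S1 := H1 m). assert (S2 := H2 m). assert (S3 := H3 m). assert (S4 := H4 m).
  assert (T1 := H1 (S m)). assert (T2 := H2 (S m)). assert (T3 := H3 (S m)). assert (T4 := H4 (S m)).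
  assert (P1 := poch_nz _ m H1). assert (P2 := poch_nz _ m H2).
  assert (P3 := poch_nz _ m H3). assert (P4 := poch_nz _ m H4).
  assert (HB : RtoC (cbinom m) <> 0) by (apply RtoC_neq0; generalize (cbinom_pos m); lra).
  assert (Hm : (0 <= INR m)%R) by apply pos_INR.
  assert (HM1 : RtoC (INR m) + 1 <> 0) by (rewrite <- RtoC_plus; apply RtoC_neq0; lra).
  assert (HM2 : 2 * RtoC (INR m) + 1 <> 0).
  { replace (2 * RtoC (INR m) + 1) with (RtoC (2 * INR m + 1)).
    apply RtoC_neq0; lra. rewrite RtoC_plus, RtoC_mult. reflexivity. }
  simpl INR in Z1, Z2, Z3, Z4. rewrite ?Cplus_0_r in Z1, Z2, Z3, Z4.
  rewrite S_INR, RtoC_plus in T1, T2, T3, T4.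
  unfold rhs_term, hh, QQ, PP.
  replace (x + 1 + a) with ((x + a) + 1) by ring.
  replace (x + 1 - a) with ((x - a) + 1) by ring.
  replace (x + 1 + b) with ((x + b) + 1) by ring.
  replace (x + 1 - b) with ((x - b) + 1) by ring.
  rewrite !(poch_shift _ _ Z1), !(poch_shift _ _ Z2), !(poch_shift _ _ Z3), !(poch_shift _ _ Z4).
  replace (S m - 1)%nat with m by lia.
  rewrite cbinom_SC.
  rewrite !pochS. rewrite !CpowS.
  rewrite !S_INR, !RtoC_plus.
  field. repeat split; auto.
Qed.

Fixpoint ssum (f : nat -> C) (n : nat) : C :=
  match n with O => 0 | S n => ssum f n + f n end.

Lemma ssum_S (f : nat -> C) n : ssum f (S n) = ssum f n + f n.
Proof. reflexivity. Qed.

Lemma ssum_minus (f g : nat -> C) n : ssum (fun j => f j - g j) n = ssum f n - ssum g n.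
Proof. induction n; simpl. ring. rewrite IHn. ring. Qed.

Lemma ssum_ext (f g : nat -> C) n : (forall j, f j = g j) -> ssum f n = ssum g n.
Proof. intro H. induction n; simpl; auto. rewrite IHn, H. auto. Qed.

Definition NZ (alpha a b : C) : Prop := forall K j : nat,
  alpha + RtoC (INR K) + a + RtoC (INR j) <> 0 /\
  alpha + RtoC (INR K) - a + RtoC (INR j) <> 0 /\
  alpha + RtoC (INR K) + b + RtoC (INR j) <> 0 /\
  alpha + RtoC (INR K) - b + RtoC (INR j) <> 0.

Lemma NZ_of (alpha a b : C) :
  (forall m : nat,
      alpha + a <> RtoC (- INR m) /\ alpha - a <> RtoC (- INR m) /\
      alpha + b <> RtoC (- INR m) /\ alpha - b <> RtoC (- INR m)) -> NZ alpha a b.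
Proof.
  intros H K j. destruct (H (K + j)%nat) as (A1 & A2 & A3 & A4).
  rewrite plus_INR, RtoC_opp, RtoC_plus in A1, A2, A3, A4.
  repeat split; intro E.
  - apply A1. replace (alpha + a) with ((alpha + RtoC (INR K) + a + RtoC (INR j)) - RtoC (INR K) - RtoC (INR j)) by ring. rewrite E. ring.
  - apply A2. replace (alpha - a) with ((alpha + RtoC (INR K) - a + RtoC (INR j)) - RtoC (INR K) - RtoC (INR j)) by ring. rewrite E. ring.
  - apply A3. replace (alpha + b) with ((alpha + RtoC (INR K) + b + RtoC (INR j)) - RtoC (INR K) - RtoC (INR j)) by ring. rewrite E. ring.
  - apply A4. replace (alpha - b) with ((alpha + RtoC (INR K) - b + RtoC (INR j)) - RtoC (INR K) - RtoC (INR j)) by ring. rewrite E. ring.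
Qed.

Lemma hh0 (x a b : C) : x + a <> 0 -> x - a <> 0 -> x + b <> 0 -> x - b <> 0 ->
  hh x a b 0 = 2 * (x / ((x * x - a * a) * (x * x - b * b))).
Proof.
  intros. unfold hh, QQ, PP. simpl. unfold cbinom. simpl.
  replace (RtoC (1 / (1 * 1))) with (RtoC 1) by (f_equal; field).
  assert (x * x - a * a <> 0) by
    (replace (x * x - a * a) with ((x + a) * (x - a)) by ring; apply Cmult_neq0; auto).
  assert (x * x - b * b <> 0) by
    (replace (x * x - b * b) with ((x + b) * (x - b)) by ring; apply Cmult_neq0; auto).
  field. repeat split; auto.
Qed.

Lemma inner_tel (x a b : C) (N : nat) :
  (forall j : nat, x + a + RtoC (INR j) <> 0) ->
  (forall j : nat, x - a + RtoC (INR j) <> 0) ->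
  (forall j : nat, x + b + RtoC (INR j) <> 0) ->
  (forall j : nat, x - b + RtoC (INR j) <> 0) ->
  ssum (fun n => rhs_term x a b (S n)) N - ssum (fun n => rhs_term (x + 1) a b (S n)) N
  = hh x a b 0 - hh x a b N.
Proof.
  intros H1 H2 H3 H4. rewrite <- ssum_minus.
  induction N; simpl. ring. rewrite IHN, key_id by auto. ring.
Qed.

Lemma telescope (alpha a b : C) (N K : nat) : NZ alpha a b ->
  2 * ssum (lhs_term alpha a b) K =
  ssum (fun n => rhs_term alpha a b (S n)) N
  - ssum (fun n => rhs_term (alpha + RtoC (INR K)) a b (S n)) N
  + ssum (fun k => hh (alpha + RtoC (INR k)) a b N) K.
Proof.
  intro HN. induction K as [|K IH].
  - replace (alpha + RtoC (INR 0)) with alpha by (simpl; ring). simpl. ring.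
  - rewrite !ssum_S.
    destruct (HN K O) as (A1 & A2 & A3 & A4). simpl INR in A1, A2, A3, A4.
    rewrite !Cplus_0_r in A1, A2, A3, A4.
    assert (E := inner_tel (alpha + RtoC (INR K)) a b N
      (fun j => proj1 (HN K j)) (fun j => proj1 (proj2 (HN K j)))
      (fun j => proj1 (proj2 (proj2 (HN K j)))) (fun j => proj2 (proj2 (proj2 (HN K j))))).
    rewrite hh0 in E by auto.
    replace (alpha + RtoC (INR K) + 1) with (alpha + RtoC (INR (S K))) in E
      by (rewrite S_INR, RtoC_plus; ring).
    unfold lhs_term at 2.
    replace (RtoC (INR K) + alpha) with (alpha + RtoC (INR K)) by ring.
    rewrite Cmult_plus_distr_l, IH.
    match type of E with _ = ?T - ?hK =>
      replace T with ((ssum (fun n => rhs_term (alpha + RtoC (INR K)) a b (S n)) N -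
        ssum (fun n => rhs_term (alpha + RtoC (INR (S K))) a b (S n)) N) + hK)
        by (rewrite E; ring) end.
    ring.
Qed.

Lemma Cmod_lb (e : C) (r : R) : (Rabs r - Cmod e <= Cmod (e + RtoC r))%R.
Proof.
  rewrite <- Cmod_R.
  replace (RtoC r) with ((e + RtoC r) + - e) at 1 by ring.
  generalize (Cmod_triangle (e + RtoC r) (- e)). rewrite Cmod_opp. lra.
Qed.

Lemma Cmod_ub (y : C) (r : R) : (Cmod (y + RtoC r) <= Cmod y + Rabs r)%R.
Proof. rewrite <- Cmod_R. apply Cmod_triangle. Qed.

Open Scope R_scope.

Lemma finite_min (g : nat -> R) : (forall m, 0 < g m) -> forall N : nat,
  exists d, 0 < d /\ forall m : nat, (m < N)%nat -> d * (INR m + 1) <= g m.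
Proof.
  intros Hg N. induction N as [|N IH].
  - exists 1. split. lra. intros m Hm. lia.
  - destruct IH as (d & Hd & H).
    assert (HN : 0 < INR N + 1) by (generalize (pos_INR N); lra).
    exists (Rmin d (g N / (INR N + 1))). split.
    + apply Rmin_pos; auto. apply Rdiv_lt_0_compat; auto.
    + intros m Hm. assert (0 <= INR m) by apply pos_INR.
      destruct (Nat.eq_dec m N) as [->|Hne].
      * apply Rle_trans with (g N / (INR N + 1) * (INR N + 1)).
        apply Rmult_le_compat_r. lra. apply Rmin_r.
        right. field. lra.
      * apply Rle_trans with (d * (INR m + 1)).
        apply Rmult_le_compat_r. lra. apply Rmin_l. apply H. lia.
Qed.

Lemma lin_lb (e : C) : (forall m : nat, (e + RtoC (INR m) <> 0)%C) ->
  exists d, 0 < d /\ forall m : nat, d * (INR m + 1) <= Cmod (e + RtoC (INR m)).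
Proof.
  intro He.
  destruct (INR_archimed 1 (2 * Cmod e + 1)) as [n1 Hn1]. lra.
  rewrite Rmult_1_r in Hn1.
  destruct (finite_min (fun m => Cmod (e + RtoC (INR m)))
     (fun m => proj1 (Cmod_gt_0 _) (He m)) n1) as (d & Hd & H).
  exists (Rmin d (1/2)). split. apply Rmin_pos; lra.
  intro m. assert (0 <= INR m) by apply pos_INR.
  destruct (Compare_dec.lt_dec m n1) as [Hl|Hl].
  - apply Rle_trans with (d * (INR m + 1)). apply Rmult_le_compat_r. lra. apply Rmin_l.
    apply H; auto.
  - assert (INR n1 <= INR m) by (apply le_INR; lia).
    apply Rle_trans with (1/2 * (INR m + 1)). apply Rmult_le_compat_r. lra. apply Rmin_r.
    generalize (Cmod_lb e (INR m)). rewrite Rabs_pos_eq by lra. lra.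
Qed.

Lemma ratio_bound (y e : C) : (forall m : nat, (e + RtoC (INR m) <> 0)%C) ->
  exists K0, 0 < K0 /\ forall k n : nat,
    Cmod (poch y n) * (INR k + INR n + 1) <=
    K0 * (9/8) ^ n * Cmod (poch (e + RtoC (INR k)) (S n)).
Proof.
  intro He. destruct (lin_lb e He) as (d & Hd & Hl).
  destruct (INR_archimed 1 (9 * Cmod e + 8 * Cmod y + 8)) as [n0 Hn0]. lra.
  rewrite Rmult_1_r in Hn0.
  assert (Hy := Cmod_ge_0 y). assert (Hey := Cmod_ge_0 e).
  set (D := (Cmod y + INR n0) / d + 1).
  assert (HD1 : 1 <= D).
  { unfold D. assert (0 <= (Cmod y + INR n0) / d). apply Rdiv_le_0_compat; auto.
    generalize (pos_INR n0); lra. lra. }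
  assert (Hv : forall k n : nat, d <= Cmod (e + RtoC (INR k) + RtoC (INR n)) /\
                  INR n - Cmod e <= Cmod (e + RtoC (INR k) + RtoC (INR n))).
  { intros k n. replace (e + RtoC (INR k) + RtoC (INR n))%C with (e + RtoC (INR (k + n)))%C
      by (rewrite plus_INR, RtoC_plus; ring).
    split.
    - apply Rle_trans with (d * (INR (k+n) + 1)). generalize (pos_INR (k+n)); nra. apply Hl.
    - generalize (Cmod_lb e (INR (k+n))). rewrite Rabs_pos_eq by apply pos_INR.
      rewrite plus_INR. generalize (pos_INR k); lra. }
  assert (Hmain : forall k n : nat,
    Cmod (poch y n) <= D ^ (Nat.min n n0) * (9/8) ^ n * Cmod (poch (e + RtoC (INR k)) n)).
  { intros k n. induction n as [|n IH].
    - simpl. rewrite Cmod_1. lra.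
    - rewrite !pochS, !Cmod_mult.
      assert (HX := Cmod_ge_0 (poch y n)).
      assert (HY := Cmod_ge_0 (poch (e + RtoC (INR k)) n)).
      assert (Hu := Cmod_ub y (INR n)). rewrite Rabs_pos_eq in Hu by apply pos_INR.
      destruct (Hv k n) as [Hv1 Hv2].
      assert (Hr : 0 <= (9/8) ^ n) by (apply pow_le; lra).
      assert (Hdm : 0 <= D ^ Nat.min n n0) by (apply pow_le; lra).
      assert (HF : exists F, 0 <= F /\
        Cmod (y + RtoC (INR n)) <= F * Cmod (e + RtoC (INR k) + RtoC (INR n)) /\
        D ^ Nat.min n n0 * (9/8)^n * F <= D ^ Nat.min (S n) n0 * (9/8) ^ (S n)).
      { destruct (Compare_dec.lt_dec n n0) as [Hlt|Hge].
        - exists D. split. lra. split.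
          + assert (INR n <= INR n0) by (apply le_INR; lia).
            assert (Hdd : Cmod y + INR n0 = (D - 1) * d) by (unfold D; field; lra).
            assert (0 <= (D - 1) * (Cmod (e + RtoC (INR k) + RtoC (INR n)) - d))
              by (apply Rmult_le_pos; lra).
            nra.
          + replace (Nat.min (S n) n0) with (S (Nat.min n n0)) by lia. simpl.
            assert (0 <= D ^ Nat.min n n0 * (9/8)^n * D) by (apply Rmult_le_pos; [apply Rmult_le_pos|]; lra).
            nra.
        - exists (9/8). split. lra. split.
          + assert (INR n0 <= INR n) by (apply le_INR; lia). nra.
          + replace (Nat.min (S n) n0) with (Nat.min n n0) by lia. simpl. nra. }
      destruct HF as (F & HF0 & HF1 & HF2).
      assert (Hu0 := Cmod_ge_0 (y + RtoC (INR n))).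
      apply Rle_trans with (D ^ Nat.min n n0 * (9/8) ^ n * Cmod (poch (e + RtoC (INR k)) n) *
        (F * Cmod (e + RtoC (INR k) + RtoC (INR n)))).
      + apply Rmult_le_compat; auto.
      + assert (0 <= Cmod (e + RtoC (INR k) + RtoC (INR n))) by apply Cmod_ge_0.
        replace (D ^ Nat.min n n0 * (9/8) ^ n * Cmod (poch (e + RtoC (INR k)) n) *
          (F * Cmod (e + RtoC (INR k) + RtoC (INR n)))) with
          ((D ^ Nat.min n n0 * (9/8) ^ n * F) * (Cmod (poch (e + RtoC (INR k)) n) *
          Cmod (e + RtoC (INR k) + RtoC (INR n)))) by ring.
        replace (D ^ Nat.min (S n) n0 * (9 / 8) ^ S n *
          (Cmod (poch (e + RtoC (INR k)) n) * Cmod (e + RtoC (INR k) + RtoC (INR n)))) with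
          ((D ^ Nat.min (S n) n0 * (9 / 8) ^ S n) *
          (Cmod (poch (e + RtoC (INR k)) n) * Cmod (e + RtoC (INR k) + RtoC (INR n)))) by ring.
        apply Rmult_le_compat_r. nra. auto. }
  exists (D ^ n0 / d). split. apply Rdiv_lt_0_compat; auto. apply pow_lt; lra.
  intros k n. rewrite pochS, Cmod_mult.
  assert (Hp : D ^ Nat.min n n0 <= D ^ n0) by (apply Rle_pow; auto; lia).
  assert (HY := Cmod_ge_0 (poch (e + RtoC (INR k)) n)).
  assert (Hr : 0 <= (9/8) ^ n) by (apply pow_le; lra).
  assert (Hw : d * (INR k + INR n + 1) <= Cmod (e + RtoC (INR k) + RtoC (INR n))).
  { replace (e + RtoC (INR k) + RtoC (INR n))%C with (e + RtoC (INR (k + n)))%C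
      by (rewrite plus_INR, RtoC_plus; ring).
    rewrite <- plus_INR. apply Hl. }
  assert (Hk : 0 <= INR k + INR n + 1) by (generalize (pos_INR k) (pos_INR n); lra).
  assert (H1 := Hmain k n).
  assert (A : Cmod (poch y n) <= D ^ n0 * (9/8) ^ n * Cmod (poch (e + RtoC (INR k)) n)).
  { apply Rle_trans with (1 := H1). apply Rmult_le_compat_r; auto.
    apply Rmult_le_compat_r; auto. }
  assert (B : INR k + INR n + 1 <= Cmod (e + RtoC (INR k) + RtoC (INR n)) / d).
  { apply (Rmult_le_reg_l d); auto.
    replace (d * (Cmod (e + RtoC (INR k) + RtoC (INR n)) / d)) with
      (Cmod (e + RtoC (INR k) + RtoC (INR n))) by (field; lra). lra. }
  apply Rle_trans with ((D ^ n0 * (9/8) ^ n * Cmod (poch (e + RtoC (INR k)) n)) *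
     (Cmod (e + RtoC (INR k) + RtoC (INR n)) / d)).
  apply Rmult_le_compat; auto. apply Cmod_ge_0.
  right. field. lra.
Qed.

Lemma mul4 (x1 x2 x3 x4 y1 y2 y3 y4 : R) :
  0 <= x1 -> 0 <= x2 -> 0 <= x3 -> 0 <= x4 ->
  x1 <= y1 -> x2 <= y2 -> x3 <= y3 -> x4 <= y4 -> x1 * x2 * x3 * x4 <= y1 * y2 * y3 * y4.
Proof.
  intros. repeat apply Rmult_le_compat; auto; repeat apply Rmult_le_pos; auto.
Qed.

Lemma QP_bound (alpha a b : C) : NZ alpha a b ->
  exists Cq, 0 < Cq /\ forall k n : nat,
    Cmod (QQ a b n) * (INR k + INR n + 1) ^ 4 <=
    Cq * ((9/8) ^ n) ^ 4 * Cmod (PP a b (alpha + RtoC (INR k)) (S n)).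
Proof.
  intro HN.
  assert (E1 : forall m : nat, ((alpha + a) + RtoC (INR m) <> 0)%C).
  { intro m. replace ((alpha + a) + RtoC (INR m))%C with (alpha + RtoC (INR 0) + a + RtoC (INR m))%C
      by (simpl; ring). apply HN. }
  assert (E2 : forall m : nat, ((alpha - a) + RtoC (INR m) <> 0)%C).
  { intro m. replace ((alpha - a) + RtoC (INR m))%C with (alpha + RtoC (INR 0) - a + RtoC (INR m))%C
      by (simpl; ring). apply HN. }
  assert (E3 : forall m : nat, ((alpha + b) + RtoC (INR m) <> 0)%C).
  { intro m. replace ((alpha + b) + RtoC (INR m))%C with (alpha + RtoC (INR 0) + b + RtoC (INR m))%C
      by (simpl; ring). apply HN. }
  assert (E4 : forall m : nat, ((alpha - b) + RtoC (INR m) <> 0)%C).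
  { intro m. replace ((alpha - b) + RtoC (INR m))%C with (alpha + RtoC (INR 0) - b + RtoC (INR m))%C
      by (simpl; ring). apply HN. }
  destruct (ratio_bound (1 + a + b) _ E1) as (K1 & HK1 & B1).
  destruct (ratio_bound (1 + a - b) _ E2) as (K2 & HK2 & B2).
  destruct (ratio_bound (1 - a + b) _ E3) as (K3 & HK3 & B3).
  destruct (ratio_bound (1 - a - b) _ E4) as (K4 & HK4 & B4).
  exists (K1 * K2 * K3 * K4). split. repeat apply Rmult_lt_0_compat; auto.
  intros k n. unfold QQ, PP.
  replace (alpha + RtoC (INR k) + a)%C with (alpha + a + RtoC (INR k))%C by ring.
  replace (alpha + RtoC (INR k) - a)%C with (alpha - a + RtoC (INR k))%C by ring.
  replace (alpha + RtoC (INR k) + b)%C with (alpha + b + RtoC (INR k))%C by ring.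
  replace (alpha + RtoC (INR k) - b)%C with (alpha - b + RtoC (INR k))%C by ring.
  rewrite !Cmod_mult.
  assert (Hs : 0 <= INR k + INR n + 1) by (generalize (pos_INR k) (pos_INR n); lra).
  replace (Cmod (poch (1 + a + b) n) * Cmod (poch (1 + a - b) n) *
    Cmod (poch (1 - a + b) n) * Cmod (poch (1 - a - b) n) * (INR k + INR n + 1) ^ 4)
  with ((Cmod (poch (1 + a + b) n) * (INR k + INR n + 1)) * (Cmod (poch (1 + a - b) n) * (INR k + INR n + 1)) *
    (Cmod (poch (1 - a + b) n) * (INR k + INR n + 1)) * (Cmod (poch (1 - a - b) n) * (INR k + INR n + 1))) by ring.
  eapply Rle_trans.
  apply mul4; try (apply Rmult_le_pos; [apply Cmod_ge_0 | auto]).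
  apply (B1 k n). apply (B2 k n). apply (B3 k n). apply (B4 k n).
  right. ring.
Qed.

Lemma cbinom_ge (n : nat) : 2 ^ n <= cbinom n.
Proof.
  induction n as [|n IH].
  - unfold cbinom. simpl. lra.
  - rewrite cbinom_S. simpl. assert (0 <= INR n) by apply pos_INR.
    assert (0 <= 2 ^ n) by (apply pow_le; lra).
    apply Rle_trans with (cbinom n * 2). lra.
    unfold Rdiv. rewrite Rmult_assoc. apply Rmult_le_compat_l. generalize (cbinom_pos n); lra.
    apply (Rmult_le_reg_r (INR n + 1)). lra. rewrite Rmult_assoc, Rinv_l by lra. lra.
Qed.

Lemma Cmod_minus_le (u v : C) : Cmod (u - v) <= Cmod u + Cmod v.
Proof. unfold Cminus. rewrite <- (Cmod_opp v). apply Cmod_triangle. Qed.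

Lemma Cmod_cst (r : R) : 0 <= r -> Cmod (RtoC r) = r.
Proof. intro. rewrite Cmod_R. apply Rabs_pos_eq; auto. Qed.

Lemma Cmod_Cpow_m1 (n : nat) : Cmod (Cpow (RtoC (-1)) n) = 1.
Proof.
  induction n. simpl. apply Cmod_1. rewrite CpowS, Cmod_mult, IHn, Cmod_R.
  unfold Rabs. destruct (Rcase_abs (-1)); lra.
Qed.

Definition Nq (x a b : C) (n : nat) : C :=
  let N := RtoC (INR n) in
  5 * N * N - 6 * N * (1 - x) + 2 * (1 - x) * (1 - x) - a * a - b * b.

Lemma rhs_eq (x a b : C) (n : nat) : rhs_term x a b (S n) =
  (Cpow (RtoC (-1)) n * QQ a b n * Nq x a b (S n) /
   (RtoC (INR (S n)) * RtoC (cbinom (S n)) * PP a b x (S n)))%C.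
Proof.
  unfold rhs_term, QQ, PP, Nq. replace (S n - 1)%nat with n by lia.
  unfold Cdiv. f_equal. f_equal. ring.
Qed.

Lemma Nq_bound (alpha a b : C) (K n : nat) :
  Cmod (Nq (alpha + RtoC (INR K)) a b (S n)) <=
  (5 + 6 * (1 + Cmod alpha) + 2 * (1 + Cmod alpha) ^ 2 + Cmod a ^ 2 + Cmod b ^ 2)
  * (INR K + INR n + 1) ^ 2.
Proof.
  unfold Nq. set (s := INR K + INR n + 1).
  assert (HK := pos_INR K). assert (Hn := pos_INR n). assert (Ha := Cmod_ge_0 alpha).
  assert (Hs1 : 1 <= s) by (unfold s; lra).
  assert (HN : Cmod (RtoC (INR (S n))) <= s).
  { rewrite Cmod_cst by apply pos_INR. rewrite S_INR. unfold s; lra. }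
  assert (HN0 := Cmod_ge_0 (RtoC (INR (S n)))).
  assert (Hx : Cmod (1 - (alpha + RtoC (INR K))) <= (1 + Cmod alpha) * s).
  { eapply Rle_trans. apply Cmod_minus_le. rewrite Cmod_1.
    eapply Rle_trans. apply Rplus_le_compat_l. apply Cmod_triangle.
    rewrite Cmod_cst by auto. unfold s. nra. }
  assert (Hx0 := Cmod_ge_0 (1 - (alpha + RtoC (INR K)))).
  set (u := Cmod (1 - (alpha + RtoC (INR K)))) in *.
  set (w := Cmod (RtoC (INR (S n)))) in *.
  eapply Rle_trans. apply Cmod_minus_le.
  eapply Rle_trans. apply Rplus_le_compat_r. apply Cmod_minus_le.
  eapply Rle_trans. apply Rplus_le_compat_r. apply Rplus_le_compat_r. apply Cmod_triangle.
  eapply Rle_trans. apply Rplus_le_compat_r. apply Rplus_le_compat_r. apply Rplus_le_compat_r.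
  apply Cmod_minus_le.
  rewrite !Cmod_mult. rewrite !Cmod_cst by lra. fold u w.
  assert (w * w <= s * s) by nra.
  assert (Hss : 1 <= s * s) by nra.
  assert (w * u <= s * ((1 + Cmod alpha) * s)) by nra.
  assert (u * u <= ((1 + Cmod alpha) * s) * ((1 + Cmod alpha) * s)) by nra.
  assert (Cmod a * Cmod a <= Cmod a ^ 2 * (s * s)).
  { assert (0 <= Cmod a * Cmod a) by nra. replace (Cmod a ^ 2) with (Cmod a * Cmod a) by ring. nra. }
  assert (Cmod b * Cmod b <= Cmod b ^ 2 * (s * s)).
  { assert (0 <= Cmod b * Cmod b) by nra. replace (Cmod b ^ 2) with (Cmod b * Cmod b) by ring. nra. }
  rewrite (Cmod_cst 6), (Cmod_cst 2) by lra. simpl. nra.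
Qed.

Lemma div_le (a b c d : R) : 0 < b -> 0 < d -> a * d <= c * b -> a / b <= c / d.
Proof.
  intros Hb Hd H.
  replace (a / b) with ((a * d) * / (b * d)) by (field; lra).
  replace (c / d) with ((c * b) * / (b * d)) by (field; lra).
  apply Rmult_le_compat_r; auto. left. apply Rinv_0_lt_compat. nra.
Qed.

Definition Tn (n : nat) : R := ((9/8) ^ n) ^ 4 / 2 ^ n.

Lemma Tn_eq (n : nat) : Tn n = ((9/8) ^ 4 / 2) ^ n.
Proof.
  unfold Tn. rewrite <- (pow_mult (9/8) n 4), Nat.mul_comm, pow_mult.
  set (q := (9/8)^4). unfold Rdiv. rewrite Rpow_mult_distr, pow_inv. reflexivity.
Qed.

Lemma PP_nz (alpha a b : C) (K n : nat) : NZ alpha a b -> PP a b (alpha + RtoC (INR K)) n <> 0%C.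
Proof.
  intro HN. unfold PP. repeat apply Cmult_neq0; apply poch_nz; intro j; apply HN.
Qed.

Lemma rhs_bound (alpha a b : C) : NZ alpha a b ->
  exists W, 0 < W /\ forall K n : nat,
    Cmod (rhs_term (alpha + RtoC (INR K)) a b (S n)) <= W * Tn n / (INR K + INR n + 1) ^ 2.
Proof.
  intro HN. destruct (QP_bound alpha a b HN) as (Cq & HCq & HQ).
  set (M := 5 + 6 * (1 + Cmod alpha) + 2 * (1 + Cmod alpha) ^ 2 + Cmod a ^ 2 + Cmod b ^ 2).
  assert (HM : 0 < M).
  { unfold M. assert (0 <= Cmod alpha) by apply Cmod_ge_0.
    assert (0 <= Cmod a ^ 2) by (apply pow_le; apply Cmod_ge_0).
    assert (0 <= Cmod b ^ 2) by (apply pow_le; apply Cmod_ge_0).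
    assert (0 <= (1 + Cmod alpha) ^ 2) by (apply pow_le; lra). lra. }
  exists (Cq * M). split. nra.
  intros K n.
  assert (HP := PP_nz alpha a b K (S n) HN).
  assert (HPp := proj1 (Cmod_gt_0 _) HP).
  assert (Hcb := cbinom_pos (S n)). assert (Hcb2 := cbinom_ge (S n)).
  assert (Hn := pos_INR n). assert (HK := pos_INR K).
  assert (HSn : 0 < INR (S n)) by (rewrite S_INR; lra).
  rewrite rhs_eq, Cmod_div.
  2:{ apply Cmult_neq0; [apply Cmult_neq0|exact HP]; apply RtoC_neq0; lra. }
  rewrite !Cmod_mult, Cmod_Cpow_m1, !Cmod_cst by lra.
  assert (HQn := HQ K n). assert (HNq := Nq_bound alpha a b K n). fold M in HNq.
  set (X := Cmod (QQ a b n)) in *. set (Y := Cmod (PP a b (alpha + RtoC (INR K)) (S n))) in *.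
  set (Z := Cmod (Nq (alpha + RtoC (INR K)) a b (S n))) in *.
  set (s := INR K + INR n + 1) in *.
  assert (Hs : 1 <= s) by (unfold s; lra).
  assert (HX : 0 <= X) by apply Cmod_ge_0. assert (HZ : 0 <= Z) by apply Cmod_ge_0.
  set (r4 := ((9/8) ^ n) ^ 4) in *.
  assert (Hr4 : 0 <= r4) by (unfold r4; apply pow_le, pow_le; lra).
  assert (H2n : 0 < 2 ^ n) by (apply pow_lt; lra).
  apply div_le. apply Rmult_lt_0_compat; [apply Rmult_lt_0_compat; lra|auto]. apply pow_lt; lra.
  set (g := INR (S n) * cbinom (S n) / 2 ^ n).
  assert (Hg : 1 <= g).
  { unfold g. apply (Rmult_le_reg_r (2 ^ n)); auto. unfold Rdiv.
    rewrite Rmult_assoc, Rinv_l by lra. rewrite Rmult_1_l, Rmult_1_r.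
    simpl in Hcb2. rewrite S_INR. assert (0 <= INR n * cbinom (S n)) by (apply Rmult_le_pos; lra).
    lra. }
  replace (Cq * M * Tn n * (INR (S n) * cbinom (S n) * Y)) with (Cq * M * r4 * Y * g)
    by (unfold g, Tn, r4; field; lra).
  assert (Hs4 : s ^ 4 = s ^ 2 * s ^ 2) by ring.
  assert (Hs2 : 1 <= s ^ 2) by (replace (s ^ 2) with (s * s) by ring; rewrite <- (Rmult_1_l 1); apply Rmult_le_compat; lra).
  assert (HY0 : 0 <= Cq * M * r4 * Y) by (apply Rmult_le_pos; [apply Rmult_le_pos; [apply Rmult_le_pos; lra|exact Hr4]|lra]).
  apply Rle_trans with (Cq * M * r4 * Y);
    [|rewrite <- (Rmult_1_r (Cq * M * r4 * Y)) at 1; apply Rmult_le_compat_l; lra].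
  apply Rle_trans with (X * (M * s ^ 2) * s ^ 2).
  { rewrite Rmult_1_l. apply Rmult_le_compat_r. apply pow_le; lra. apply Rmult_le_compat_l; auto. }
  replace (X * (M * s ^ 2) * s ^ 2) with (M * (X * s ^ 4)) by ring.
  replace (Cq * M * r4 * Y) with (M * (Cq * r4 * Y)) by ring.
  apply Rmult_le_compat_l. lra. auto.
Qed.

Lemma r4_le (n : nat) : ((9/8) ^ n) ^ 4 <= 2 ^ n.
Proof.
  rewrite <- pow_mult, Nat.mul_comm, pow_mult. apply pow_incr. split.
  apply pow_le; lra. simpl. lra.
Qed.

Lemma hh_bound (alpha a b : C) : NZ alpha a b ->
  exists V, 0 < V /\ forall k K : nat,
    Cmod (hh (alpha + RtoC (INR k)) a b K) <= V / (INR k + INR K + 1) ^ 3.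
Proof.
  intro HN. destruct (QP_bound alpha a b HN) as (Cq & HCq & HQ).
  assert (Ha := Cmod_ge_0 alpha).
  exists (Cq * (2 * Cmod alpha + 2)). split. nra.
  intros k K.
  assert (HP := PP_nz alpha a b k (S K) HN).
  assert (HPp := proj1 (Cmod_gt_0 _) HP).
  assert (Hcb := cbinom_pos K). assert (Hcb2 := cbinom_ge K).
  assert (Hk := pos_INR k). assert (HK := pos_INR K).
  unfold hh. rewrite Cmod_div.
  2:{ apply Cmult_neq0; [|exact HP]; apply RtoC_neq0; lra. }
  rewrite !Cmod_mult, Cmod_Cpow_m1, !Cmod_cst by lra.
  assert (HQn := HQ k K).
  set (s := INR k + INR K + 1) in *.
  assert (Hs : 1 <= s) by (unfold s; lra).
  assert (HZ : Cmod (2 * (alpha + RtoC (INR k)) + RtoC (INR K)) <= (2 * Cmod alpha + 2) * s).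
  { eapply Rle_trans. apply Cmod_triangle. rewrite Cmod_mult, Cmod_cst by lra.
    eapply Rle_trans. apply Rplus_le_compat_r. apply Rmult_le_compat_l. lra. apply Cmod_triangle.
    rewrite !Cmod_cst by lra. unfold s. nra. }
  set (X := Cmod (QQ a b K)) in *. set (Y := Cmod (PP a b (alpha + RtoC (INR k)) (S K))) in *.
  set (Z := Cmod (2 * (alpha + RtoC (INR k)) + RtoC (INR K))) in *.
  assert (HX : 0 <= X) by apply Cmod_ge_0. assert (HZ0 : 0 <= Z) by apply Cmod_ge_0.
  assert (Hr := r4_le K). set (r4 := ((9/8) ^ K) ^ 4) in *.
  assert (Hr4 : 0 <= r4) by (unfold r4; apply pow_le, pow_le; lra).
  apply div_le. apply Rmult_lt_0_compat; auto. apply pow_lt; lra.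
  rewrite Rmult_1_l.
  assert (Hs3 : 0 <= s ^ 3) by (apply pow_le; lra).
  apply Rle_trans with (X * ((2 * Cmod alpha + 2) * s) * s ^ 3).
  { apply Rmult_le_compat_r; auto. apply Rmult_le_compat_l; auto. }
  replace (X * ((2 * Cmod alpha + 2) * s) * s ^ 3) with ((2 * Cmod alpha + 2) * (X * s ^ 4)) by ring.
  apply Rle_trans with ((2 * Cmod alpha + 2) * (Cq * r4 * Y)).
  { apply Rmult_le_compat_l. lra. auto. }
  replace (Cq * (2 * Cmod alpha + 2) * (cbinom K * Y)) with ((2 * Cmod alpha + 2) * (Cq * cbinom K * Y)) by ring.
  apply Rmult_le_compat_l. lra. apply Rmult_le_compat_r. lra. apply Rmult_le_compat_l. lra. lra.
Qed.

Fixpoint rs (g : nat -> R) (n : nat) : R :=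
  match n with O => 0 | S n => rs g n + g n end.

Lemma ssum_bound (f : nat -> C) (g : nat -> R) (n : nat) :
  (forall j, (j < n)%nat -> Cmod (f j) <= g j) -> Cmod (ssum f n) <= rs g n.
Proof.
  induction n as [|n IH]; intro H; simpl.
  - rewrite Cmod_0. lra.
  - eapply Rle_trans. apply Cmod_triangle. apply Rplus_le_compat.
    apply IH. intros j Hj. apply H. lia. apply H. lia.
Qed.

Lemma rs_geom (c q : R) (n : nat) : 0 <= c -> 0 <= q < 1 ->
  rs (fun j => c * q ^ j) n <= c / (1 - q).
Proof.
  intros Hc Hq.
  assert (E : forall n, rs (fun j => c * q ^ j) n * (1 - q) = c * (1 - q ^ n)).
  { induction n0; simpl. ring. rewrite Rmult_plus_distr_r, IHn0. ring. }
  apply (Rmult_le_reg_r (1 - q)). lra. rewrite E.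
  replace (c / (1 - q) * (1 - q)) with c by (field; lra).
  assert (0 <= q ^ n) by (apply pow_le; lra). nra.
Qed.

Lemma rs_const (c : R) (n : nat) : rs (fun _ => c) n = INR n * c.
Proof. induction n; simpl rs. simpl. ring. rewrite IHn, S_INR. ring. Qed.

Lemma sum_ssum (f : nat -> C) (n : nat) : sum_n f n = ssum f (S n).
Proof.
  induction n. rewrite sum_O. simpl. ring.
  rewrite sum_Sn, IHn. reflexivity.
Qed.


Open Scope C_scope.

Theorem theorem3 (alpha a b : C) :
  (forall m : nat,
      alpha + a <> RtoC (- INR m) /\ alpha - a <> RtoC (- INR m) /\
      alpha + b <> RtoC (- INR m) /\ alpha - b <> RtoC (- INR m)) ->
  exists L R : C,
    is_series (lhs_term alpha a b) L /\
    is_series (fun m : nat => rhs_term alpha a b (S m)) R /\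
    L = R / 2.
Proof.
  Open Scope R_scope.
  intro H. assert (HN := NZ_of _ _ _ H).
  destruct (rhs_bound _ _ _ HN) as (W & HW & HBr).
  destruct (hh_bound _ _ _ HN) as (V & HV & HBh).
  set (th := (9/8) ^ 4 / 2).
  assert (Hth : 0 <= th < 1) by (unfold th; simpl; lra).
  assert (Hr0 : forall n, Cmod (rhs_term alpha a b (S n)) <= W * th ^ n).
  { intro n. assert (E := HBr O n).
    replace (alpha + RtoC (INR 0))%C with alpha in E by (simpl; ring).
    rewrite Tn_eq in E. fold th in E. eapply Rle_trans. exact E.
    simpl INR. assert (Hn := pos_INR n).
    assert (0 <= W * th ^ n) by (apply Rmult_le_pos; [lra| apply pow_le; lra]).
    apply Rle_trans with (W * th ^ n / 1). apply div_le; try lra.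
    apply pow_lt; lra. rewrite Rmult_1_r.
    rewrite <- (Rmult_1_r (W * th ^ n)) at 1. apply Rmult_le_compat_l. lra.
    replace ((0 + INR n + 1) ^ 2) with ((INR n + 1) * (INR n + 1)) by ring. nra.
    lra. }
  assert (Hex : ex_series (fun m : nat => rhs_term alpha a b (S m))).
  { apply (@ex_series_le C_AbsRing C_CompleteNormedModule _ (fun n => scal W (th ^ n))).
    - intro n. exact (Hr0 n).
    - exists (scal W (/ (1 - th))). apply (@is_series_scal_l R_AbsRing R_NormedModule). apply is_series_geom.
      rewrite Rabs_pos_eq; lra. }
  destruct Hex as [Rl HR].
  exists (Rl / 2)%C, Rl. split; [|split; [exact HR|reflexivity]].
  unfold is_series. apply filterlim_locally_ball_norm. intro eps.
  unfold is_series in HR. apply (proj1 (filterlim_locally_ball_norm _ _)) with (eps := eps) in HR.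
  destruct HR as [N0 HN0].
  set (cst := W / (1 - th) + V).
  assert (Hcst : 0 < cst) by (unfold cst; apply Rplus_lt_0_compat; auto; apply Rdiv_lt_0_compat; lra).
  destruct (INR_archimed eps cst) as [N1 HN1]. apply cond_pos.
  exists (max N0 N1). intros K HK.
  assert (HK0 : (N0 <= K)%nat) by lia. assert (HK1 : (N1 <= K)%nat) by lia.
  specialize (HN0 K HK0).
  unfold ball_norm in *.
  change (norm (minus (sum_n (lhs_term alpha a b) K) (Rl / 2)%C)) with
    (Cmod (sum_n (lhs_term alpha a b) K - Rl / 2)%C).
  change (norm (minus (sum_n (fun m : nat => rhs_term alpha a b (S m)) K) Rl)) with
    (Cmod (sum_n (fun m : nat => rhs_term alpha a b (S m)) K - Rl)%C) in HN0.
  rewrite sum_ssum in *.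
  assert (T := telescope alpha a b (S K) (S K) HN).
  set (Bs := ssum (fun n : nat => rhs_term (alpha + RtoC (INR (S K))) a b (S n)) (S K)) in T.
  set (Es := ssum (fun k : nat => hh (alpha + RtoC (INR k)) a b (S K)) (S K)) in T.
  set (As := ssum (fun n : nat => rhs_term alpha a b (S n)) (S K)) in *.
  assert (HKp : 0 < INR K + 1) by (generalize (pos_INR K); lra).
  assert (HBs : Cmod Bs <= W / (INR K + 1) / (1 - th)).
  { unfold Bs. eapply Rle_trans. apply (ssum_bound _ (fun j => W / (INR K + 1) * th ^ j)).
    - intros j _. eapply Rle_trans. apply HBr. rewrite Tn_eq. fold th.
      assert (Hj := pos_INR j). rewrite S_INR.
      assert (0 <= th ^ j) by (apply pow_le; lra).
      replace (W / (INR K + 1) * th ^ j) with (W * th ^ j / (INR K + 1)) by (field; lra).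
      apply div_le. apply pow_lt; lra. lra.
      replace ((INR K + 1 + INR j + 1) ^ 2) with ((INR K + 1 + INR j + 1) * (INR K + 1 + INR j + 1)) by ring.
      assert (0 <= W * th ^ j) by (apply Rmult_le_pos; lra).
      assert (INR K + 1 <= (INR K + 1 + INR j + 1) * (INR K + 1 + INR j + 1)) by nra.
      apply Rmult_le_compat_l; lra.
    - apply rs_geom; auto. apply Rlt_le, Rdiv_lt_0_compat; lra. }
  assert (HEs : Cmod Es <= V / (INR K + 1)).
  { unfold Es. eapply Rle_trans. apply (ssum_bound _ (fun _ => V / (INR K + 1) ^ 2)).
    - intros j _. eapply Rle_trans. apply HBh. assert (Hj := pos_INR j). rewrite S_INR.
      apply div_le. apply pow_lt; lra. apply pow_lt; lra.
      apply Rmult_le_compat_l. lra.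
      replace ((INR j + (INR K + 1) + 1) ^ 3) with
        ((INR j + (INR K + 1) + 1) * (INR j + (INR K + 1) + 1) * (INR j + (INR K + 1) + 1)) by ring.
      replace ((INR K + 1) ^ 2) with ((INR K + 1) * (INR K + 1)) by ring.
      assert ((INR K + 1) * (INR K + 1) <= (INR j + (INR K + 1) + 1) * (INR j + (INR K + 1) + 1)) by nra.
      assert (1 <= INR j + (INR K + 1) + 1) by lra. nra.
    - rewrite rs_const, S_INR. right. field. lra. }
  assert (Eq : (ssum (lhs_term alpha a b) (S K) - Rl / 2 = ((As - Rl) - Bs + Es) / 2)%C).
  { replace (ssum (lhs_term alpha a b) (S K)) with ((2 * ssum (lhs_term alpha a b) (S K)) / 2)%C
      by (field; try (apply RtoC_neq0; lra)).
    rewrite T. field; try (apply RtoC_neq0; lra). }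
  rewrite Eq. unfold Cdiv. rewrite Cmod_mult.
  rewrite Cmod_inv by (apply RtoC_neq0; lra). rewrite Cmod_cst by lra.
  assert (Htri : Cmod (As - Rl - Bs + Es) <= Cmod (As - Rl) + Cmod Bs + Cmod Es).
  { eapply Rle_trans. apply Cmod_triangle. apply Rplus_le_compat_r. apply Cmod_minus_le. }
  assert (HN1' : cst / (INR K + 1) < eps).
  { assert (INR N1 <= INR K) by (apply le_INR; auto).
    apply (Rmult_lt_reg_r (INR K + 1)); auto. unfold Rdiv. rewrite Rmult_assoc, Rinv_l by lra.
    assert (0 < eps) by apply cond_pos. nra. }
  assert (Hsplit : W / (INR K + 1) / (1 - th) + V / (INR K + 1) = cst / (INR K + 1))
    by (unfold cst; field; lra).
  assert (0 < / 2) by lra. nra.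
Qed.
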